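(* Let $\mathcal{F}\subseteq\mathcal{P}(\omega)$ be a free filter. Then $\mathcal{F}\times 2$ is homeomorphic to $\mathcal{F}$.
   Context: $\mathcal{P}(\omega)$ carries the Cantor set topology, obtained by identifying each subset of $\omega$ with its characteristic function in $2^\omega$; $\mathcal{F}$ has the subspace topology, and $2=\{0,1\}$ is discrete. A filter on $\omega$ is free if it contains all cofinite subsets of $\omega$ (and does not contain $\emptyset$). *)

(* Defs.v *)
From HB Require Import structures.
From mathcomp Require Import all_boot all_order all_algebra.
From mathcomp Require Import all_classical all_reals all_analysis.
Set Implicit Arguments. Unset Strict Implicit. Unset Printing Implicit Defensive.
Local Open Scope classical_set_scope.

(* P(omega) is identified with the Cantor space 2^omega = cantor_space
   (nat -> bool with the product topology of discrete bool): a subset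
   of omega is its characteristic function. *)

Definition cofinite (a : cantor_space) : Prop := finite_set [set n | ~~ a n].

Definition free_filter (F : set cantor_space) : Prop :=
  [/\ (forall a b : cantor_space, F a -> (forall n, a n -> b n) -> F b),
      (forall a b : cantor_space, F a -> F b -> F (fun n => a n && b n)),
      (forall a : cantor_space, cofinite a -> F a) &
      ~ F (fun _ => false)].

Definition homeomorphic_subspaces {T U : topologicalType}
  (A : set T) (B : set U) : Prop :=
  exists (f : T -> U) (g : U -> T),
    [/\ (forall x, A x -> B (f x) /\ g (f x) = x),
        (forall y, B y -> A (g y) /\ f (g y) = y),
        {within A, continuous f} &
        {within B, continuous g}].

(* Main.v *)
Require Import Defs.
From HB Require Import structures.
From mathcomp Require Import all_boot all_order all_algebra.
From mathcomp Require Import all_classical all_reals all_analysis.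
Local Open Scope classical_set_scope.

Lemma cont_into_cantor (T : topologicalType) (h : T -> cantor_space) :
  (forall n, continuous (fun x => h x n)) -> continuous h.
Proof.
move=> hc x; apply/cvg_sup => i; apply/cvg_image => //.
  apply/seteqP; split => // b _; exists (fun _ => b) => //.
move=> B /hc /= HB.
exists [set g : cantor_space | B (g i)]; first exact: HB.
apply/seteqP; split => [b [g Bg <-]//|b Bb]; exists (fun _ => b) => //.
Qed.

Lemma gen_homeo (F : set cantor_space) (s t : nat -> nat) (p : nat) :
  (forall m, t (s m) = m) -> (forall m, s m <> p) ->
  (forall n, n <> p -> s (t n) = n) ->
  (forall c : cantor_space, F c <-> F (fun m => c (s m))) ->
  homeomorphic_subspaces (F `*` [set: bool]) F.
Proof.
move=> ts sp st hF.
exists (fun x : cantor_space * bool =>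
  ((fun n => if n == p then x.2 else x.1 (t n)) : cantor_space)).
exists (fun c : cantor_space => ((fun m => c (s m)) : cantor_space, c p)).
split.
- move=> [a b] [/= Fa _].
  have E : (fun m => if s m == p then b else a (t (s m))) = a.
    by apply/funext => m; rewrite ifF ?ts //; apply/eqP/sp.
  split; first by apply/hF; rewrite E.
  by rewrite E eqxx.
- move=> c Fc; split; first by hnf; split => //=; exact: (proj1 (hF c)).
  apply/funext => n /=; case: eqP => [->//|/st -> //].
- apply: continuous_subspaceT; apply: cont_into_cantor => n.
  case: eqP => _ x.
    exact: cvg_snd.
  apply: (@continuous_comp _ _ _ fst (fun f : cantor_space => f (t n)) x).
    exact: cvg_fst.
  exact: (@proj_continuous nat (fun _ => bool) (t n)).
- apply: continuous_subspaceT => c.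
  have H1 : (fun c0 : cantor_space => (fun m => c0 (s m)) : cantor_space) @ c --> ((fun m => c (s m)) : cantor_space).
    apply: (@cont_into_cantor _ (fun c : cantor_space => (fun m => c (s m)) : cantor_space)) => m.
    exact: (@proj_continuous nat (fun _ => bool) (s m)).
  have H2 : (fun c0 : cantor_space => c0 p) @ c --> c p.
    exact: (@proj_continuous nat (fun _ => bool) p).
  exact: (cvg_pair H1 H2).
Qed.

Lemma agreeF (F : set cantor_space) (X c d : cantor_space) :
  free_filter F -> F X -> (forall n, X n -> c n = d n) -> F c -> F d.
Proof.
move=> [up meet _ _] FX E Fc.
apply: (up (fun n => c n && X n)); first exact: meet.
by move=> n /andP[cn xn]; rewrite -(E n xn).
Qed.

Theorem mainTheorem4 (F : set cantor_space) :
  free_filter F ->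
  homeomorphic_subspaces (F `*` [set: bool]) F.
Proof.
move=> hFF; have [up meet cof ne] := hFF.
have [[X [FX nX]]|none] := pselect (exists X, F X /\ ~ cofinite X).
- have unb : forall n, exists m, (n < m)%N && ~~ X m.
    move=> n; apply: contrapT => H; apply: nX.
    apply: (sub_finite_set _ (finite_II n.+1)) => m /= Xm.
    rewrite ltnS leqNgt; apply/negP => nm; apply: H; exists m; by rewrite nm.
  pose nxt n := ex_minn (unb n).
  have ex0 : exists m, ~~ X m by case: (unb 0) => m /andP[_ h]; exists m.
  pose p := ex_minn ex0.
  have nxtP n : [/\ (n < nxt n)%N, ~~ X (nxt n) &
      forall m, (n < m)%N -> ~~ X m -> (nxt n <= m)%N].
    rewrite /nxt; case: ex_minnP => m /andP[h1 h2] h3; split => // k nk Xk.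
    by apply: h3; rewrite nk Xk.
  have [Xp pmin] : ~~ X p /\ forall m, ~~ X m -> (p <= m)%N.
    by rewrite /p; case: ex_minnP.
  pose s n := if X n then n else nxt n.
  have s_inj : injective s.
    move=> a b; rewrite /s; case Xa: (X a); case Xb: (X b) => //.
    + by move=> E; case: (nxtP b) => _ + _; rewrite -E Xa.
    + by move=> E; case: (nxtP a) => _ + _; rewrite E Xb.
    + move=> E; apply/eqP; rewrite eqn_leq; apply/andP; split; rewrite leqNgt; apply/negP => lt.
      * case: (nxtP a) => h1 _ _; case: (nxtP b) => _ _ /(_ a lt); rewrite Xa -E => /(_ isT).
        by rewrite leqNgt h1.
      * case: (nxtP b) => h1 _ _; case: (nxtP a) => _ _ /(_ b lt); rewrite Xb E => /(_ isT).
        by rewrite leqNgt h1.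
  pose t n := xget 0%N [set m | s m = n].
  have tP n : (exists m, s m = n) -> s (t n) = n.
    by move=> h; exact: (xgetPex 0%N h).
  apply: (@gen_homeo F s t p).
  + by move=> m; apply: s_inj; apply: tP; exists m.
  + move=> m; rewrite /s; case Xm: (X m).
      by move=> E; move: Xp; rewrite -E Xm.
    case: (nxtP m) => h1 _ _ E; have := pmin m; rewrite Xm => /(_ isT).
    by rewrite leqNgt -E h1.
  + move=> n np; apply: tP; case Xn: (X n); first by exists n; rewrite /s Xn.
    have pn : (p < n)%N.
      by rewrite ltn_neqAle pmin ?Xn // andbT; apply/eqP => E; apply: np.
    have exk : exists k, (k < n)%N && ~~ X k by exists p; rewrite pn Xp.
    have bnd : forall k, (k < n)%N && ~~ X k -> (k <= n)%N.
      by move=> k /andP[/ltnW].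
    case: (ex_maxnP exk bnd) => k /andP[kn Xk] kmax.
    exists k; rewrite /s (negbTE Xk).
    case: (nxtP k) => h1 h2 h3; apply/eqP; rewrite eqn_leq h3 ?Xn //=.
    rewrite leqNgt; apply/negP => lt.
    have := kmax (nxt k); rewrite lt h2 => /(_ isT); by rewrite leqNgt h1.
  + move=> c; split.
      move=> Fc; apply: (@agreeF F X c) => // n Xn; by rewrite /s Xn.
    move=> Fc; apply: (@agreeF F X (fun m => c (s m))) => // n Xn; by rewrite /s Xn.
- have allcof : forall X, F X -> cofinite X.
    by move=> X FX; apply: contrapT => nc; apply: none; exists X.
  have Fcof : forall c, F c <-> cofinite c.
    by move=> c; split; [exact: allcof | exact: cof].
  apply: (@gen_homeo F succn predn 0%N) => //.
    by move=> n /eqP n0; rewrite prednK // lt0n.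
  move=> c; rewrite !Fcof /cofinite; split => h.
    have -> : [set n | ~~ c n.+1] = succn @^-1` [set n | ~~ c n] by [].
    by apply: finite_preimage => // a b _ _ [].
  apply: (sub_finite_set (B := [set 0%N] `|` (succn @` [set n | ~~ c n.+1]))).
    by move=> [|n] /= cn; [left | right; exists n].
  by rewrite finite_setU; split; [exact: finite_set1 | exact: finite_image].
Qed.
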